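(* Let $b\in B(-\infty)$ with $\varphi_0(b)=0$. Then $\mathbf c^\ell_{\alpha_0}(MV_{\sigma_0(b)})=0$. Moreover, $\mathbf c^\ell_\alpha(MV_{\sigma_0(b)})=\mathbf c^r_{s_0\alpha}(MV_b)$ for every positive real root $\alpha\neq\alpha_0$. The imaginary parts also agree: $\mathbf c^\ell_\delta(MV_{\sigma_0(b)})=\mathbf c^r_\delta(MV_b)$.
   Context: **Setup.** Let $\mathfrak g$ be $\widehat{\mathfrak{sl}}_2$ or $A_2^{(2)}$, with Dynkin nodes $0,1$. For $A_2^{(2)}$, node $0$ is the long root. The simple roots $\alpha_0,\alpha_1$ lie in a 3-dimensional real space. This space carries a nondegenerate symmetric form $(\cdot,\cdot)$ with $(\alpha_i,\alpha_j)=N_{ij}$, where - $N=\begin{pmatrix}2&-2\\-2&2\end{pmatrix}$ for $\widehat{\mathfrak{sl}}_2$, - $N=\begin{pmatrix}8&-4\\-4&2\end{pmatrix}$ for $A_2^{(2)}$. Write $|\alpha|=\sqrt{(\alpha,\alpha)}$. Put $\delta=\alpha_0+\alpha_1$ for $\widehat{\mathfrak{sl}}_2$ and $\delta=\alpha_0+2\alpha_1$ for $A_2^{(2)}$. Fix $\omega_0,\omega_1$ with $(\alpha_i,\omega_j)=\delta_{ij}$. Let $s_0,s_1$ be the simple reflections. The positive real roots are: - for $\widehat{\mathfrak{sl}}_2$: $\alpha_0+k\delta$ and $\alpha_1+k\delta$ ($k\ge0$); - for $A_2^{(2)}$: $\alpha_1+k\delta$, $\alpha_0+2k\delta$, $\alpha_0+\alpha_1+k\delta$,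 $2\alpha_1+(2k+1)\delta$ ($k\ge0$). The positive imaginary roots are $k\delta$, $k\ge1$. Label the positive real roots $\beta_k,\beta^k$ ($k\ge1$): - for $\widehat{\mathfrak{sl}}_2$: $\beta_k=\alpha_1+(k-1)\delta$ and $\beta^k=\alpha_0+(k-1)\delta$; - for $A_2^{(2)}$: $\beta_k=\alpha_1+\frac{k-1}{2}\delta$ ($k$ odd), $\beta_k=2\alpha_1+(k-1)\delta$ ($k$ even); $\beta^k=\alpha_0+(k-1)\delta$ ($k$ odd), $\beta^k=\alpha_0+\alpha_1+\frac{k-2}{2}\delta$ ($k$ even). **Lusztig data and pseudo-Weyl polytopes.** A Lusztig datum $\mathbf c$ consists of a nonnegative integer $\mathbf c_\beta$ for each positive real root $\beta$ (all but finitely many zero), together with a partition $\mathbf c_\delta$. Its weight is $|\mathbf c_\delta|\delta+\sum_\beta \mathbf c_\beta\beta$. A decorated pseudo-Weyl polytope $P$ is a pair $(\mathbf c^\ell(P),\mathbf c^r(P))$ of Lusztig data of equal weight $\mathrm{wt}(P)$. Its vertices are defined as follows: - $\mu^r_0=\mu^\ell_0=0$; - $\mu^r_k=\mu^r_{k-1}+\mathbf c^r_{\beta_k}\beta_k$ and $\mu^\ell_k=\mu^\ell_{k-1}+\mathbf c^\ell_{\beta^k}\beta^k$; - $\mu^{r,0}=\mu^{\ell,0}=\mathrm{wt}(P)$; - $\mu^{r,k}=\mu^{r,k-1}-\mathbf c^r_{\beta^k}\beta^k$ and $\mu^{\ell,k}=\mu^{\ell,k-1}-\mathbf c^\ell_{\beta_k}\beta_k$.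 Let $\mu^r_\infty,\mu^{r,\infty},\mu^\ell_\infty,\mu^{\ell,\infty}$ denote the eventually constant values of these sequences. **MV polytopes.** $P$ is an MV polytope if the following four conditions hold. 1. For all $k\ge2$: $\max\{(\mu^\ell_k-\mu^r_{k-1},\omega_1),(\mu^r_k-\mu^\ell_{k-1},\omega_0)\}=0$. 2. For all $k\ge2$: $\min\{(\mu^{\ell,k}-\mu^{r,k-1},\omega_0),(\mu^{r,k}-\mu^{\ell,k-1},\omega_1)\}=0$. 3. If $\mu^r_\infty-\mu^\ell_\infty$ and $\mu^{r,\infty}-\mu^{\ell,\infty}$ are parallel, then $\mathbf c^r_\delta=\mathbf c^\ell_\delta$. Otherwise one of $\mathbf c^r_\delta,\mathbf c^\ell_\delta$ is obtained from the other by removing a part of size $\frac{|\alpha_1|}{2|\alpha_0|}(\mu^r_\infty-\mu^\ell_\infty,\alpha_1)$. 4. The largest parts of $\mathbf c^r_\delta$ and $\mathbf c^\ell_\delta$ are both $\le\frac{|\alpha_1|}{2|\alpha_0|}(\mu^r_\infty-\mu^\ell_\infty,\alpha_1)$. By Baumann–Dunlap–Kamnitzer–Tingley (BDKT), for each Lusztig datum $\mathbf c$ there is exactly one MV polytope with right datum $\mathbf c$, and exactly one with left datum $\mathbf c$. Define operators on MV polytopes: - $\tilde e_0P$ is the MV polytope whose right datum is $\mathbf c^r(P)$ with $\mathbf c^r_{\alpha_0}$ increased by $1$; - $\tilde e_1P$ is the MV polytope whose left datum is $\mathbf c^\ell(P)$ with $\mathbf c^\ell_{\alpha_1}$ increased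 by $1$; - $\tilde f_0,\tilde f_1$ decrease these entries instead, giving $\emptyset$ if the entry is $0$. By BDKT, the set of MV polytopes with these operators is a crystal isomorphic to $B(-\infty)$. For $b\in B(-\infty)$, $MV_b$ denotes the MV polytope corresponding to $b$. **Crystal notation.** $B(-\infty)$ is Kashiwara's crystal of $U_q^+(\mathfrak g)$ (lowest weight $b_0$, operators $\tilde e_i,\tilde f_i$, weight map $\mathrm{wt}$). Define $\varphi_i(b)=\max\{n:\tilde f_i^nb\ne\emptyset\}$ and $\varepsilon_i(b)=\varphi_i(b)-\langle\alpha_i^\vee,\mathrm{wt} b\rangle$. Let $*$ be Kashiwara's involution. Set $\tilde e_i^*=*\tilde e_i*$, $\tilde f_i^*=*\tilde f_i*$, $\varphi_i^*=\varphi_i\circ*$ and $\varepsilon_i^*=\varepsilon_i\circ*$. For $g\in\{\tilde f_i,\tilde f_i^*\}$, $g^{\max}x$ means $g^mx$ with $m$ maximal such that $g^mx\ne\emptyset$. **Saito reflections (convention used here).** For $b$ with $\varphi_i(b)=0$, set $\sigma_i(b):=(\tilde f_i^* )^{\max}\tilde e_i^{\,N}b$ for any $N\ge\varepsilon_i^*(b)$; this is independent of $N$. For $b$ with $\varphi_i^*(b)=0$, set $\sigma_i^*(b):=*\sigma_i( *b)=\tilde f_i^{\max}(\tilde e_i^* )^Nb$ for $N\ge\varepsilon_i(b)$. *)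

(* Defs.v *)
From HB Require Import structures.
From mathcomp Require Import all_boot all_order all_algebra.
From Stdlib Require Import ClassicalEpsilon.
Set Implicit Arguments. Unset Strict Implicit. Unset Printing Implicit Defensive.
Import Order.TTheory GRing.Theory Num.Theory.
Local Open Scope ring_scope.

Inductive afftype := SL2 | A22 (* A_2^{(2)}, node 0 long *).

(* Weights in the root lattice Z alpha_0 + Z alpha_1, given by their
   coordinates (a0, a1) : mu = a0 alpha_0 + a1 alpha_1.  All vertices of
   pseudo-Weyl polytopes lie in this lattice. *)
Definition weight := (int * int)%type.
Definition wzero : weight := (0, 0).
Definition wadd (u v : weight) : weight := (u.1 + v.1, u.2 + v.2).
Definition wsub (u v : weight) : weight := (u.1 - v.1, u.2 - v.2).
Definition wscale (n : nat) (u : weight) : weight := (n%:Z * u.1, n%:Z * u.2).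

Definition alpha0 : weight := (1, 0).
Definition alpha1 : weight := (0, 1).
Definition delta (t : afftype) : weight :=
  match t with SL2 => (1, 1) | A22 => (1, 2) end.

(* (mu, omega_0) and (mu, omega_1) *)
Definition pw0 (u : weight) : int := u.1.
Definition pw1 (u : weight) : int := u.2.
(* (mu, alpha_1) via the matrix N *)
Definition pa1 (t : afftype) (u : weight) : int :=
  match t with SL2 => -2 * u.1 + 2 * u.2 | A22 => -4 * u.1 + 2 * u.2 end.
(* <alpha_0^vee, mu> = 2 (alpha_0, mu) / (alpha_0, alpha_0) *)
Definition ca0 (t : afftype) (u : weight) : int :=
  match t with SL2 => 2 * u.1 - 2 * u.2 | A22 => 2 * u.1 - u.2 end.
(* d = 2|alpha_0| / |alpha_1|, so that |alpha_1|/(2|alpha_0|) x = x / d *)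
Definition dfac (t : afftype) : int := match t with SL2 => 2 | A22 => 4 end.
Definition s0 (t : afftype) (u : weight) : weight := (u.1 - ca0 t u, u.2).

(* betaB t i = beta_{i+1},  betaT t i = beta^{i+1} *)
Definition betaB (t : afftype) (i : nat) : weight :=
  match t with
  | SL2 => ((i : int), (i.+1 : int))
  | A22 => if odd i then ((i : int), ((2 * i + 2)%N : int))
           else (((i./2)%N : int), ((i.+1)%N : int))
  end.
Definition betaT (t : afftype) (i : nat) : weight :=
  match t with
  | SL2 => ((i.+1 : int), (i : int))
  | A22 => if odd i then ((i.+1./2)%N : int, (i : int))
           else ((i.+1 : int), ((2 * i)%N : int))
  end.

(* Labels of positive real roots: LB i = beta_{i+1}, LT i = beta^{i+1}. *)
Inductive rlabel := LB of nat | LT of nat.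
Definition rroot (t : afftype) (r : rlabel) : weight :=
  match r with LB i => betaB t i | LT i => betaT t i end.

(* Lusztig datum: cB = (c_{beta_1}, c_{beta_2}, ...), cT = (c_{beta^1}, ...),
   with implicit trailing zeros, and cD = the partition c_delta
   (nonincreasing list of positive parts). *)
Record ldatum := LD { cB : seq nat; cT : seq nat; cD : seq nat }.

Definition coef (c : ldatum) (r : rlabel) : nat :=
  match r with LB i => nth 0%N (cB c) i | LT i => nth 0%N (cT c) i end.

Fixpoint trimz (s : seq nat) : seq nat :=
  match s with
  | [::] => [::]
  | x :: s' => let u := trimz s' in
               if (x == 0%N) && (u == [::]) then [::] else x :: u
  end.

Definition valid_datum (c : ldatum) : Prop :=
  trimz (cB c) = cB c /\ trimz (cT c) = cT c /\
  sorted geq (cD c) /\ all (fun x => 0 < x)%N (cD c).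

Fixpoint lin (beta : nat -> weight) (s : seq nat) (k : nat) : weight :=
  match k with
  | 0 => wzero
  | k'.+1 => wadd (lin beta s k') (wscale (nth 0%N s k') (beta k'))
  end.

Definition wt (t : afftype) (c : ldatum) : weight :=
  wadd (wscale (sumn (cD c)) (delta t))
       (wadd (lin (betaB t) (cB c) (size (cB c)))
             (lin (betaT t) (cT c) (size (cT c)))).

(* decorated pseudo-Weyl polytope: (left datum, right datum) *)
Definition pwpoly := (ldatum * ldatum)%type.
Definition cl (P : pwpoly) := P.1.
Definition cr (P : pwpoly) := P.2.
Definition wtP (t : afftype) (P : pwpoly) : weight := wt t (cr P).

Definition mu_r t P k := lin (betaB t) (cB (cr P)) k.
Definition mu_l t P k := lin (betaT t) (cT (cl P)) k.
Definition mu_R t P k := wsub (wtP t P) (lin (betaT t) (cT (cr P)) k). (* mu^{r,k} *)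
Definition mu_L t P k := wsub (wtP t P) (lin (betaB t) (cB (cl P)) k). (* mu^{l,k} *)
(* eventual values (the sequences are constant from the length of the data on) *)
Definition mu_r_inf t P := mu_r t P (size (cB (cr P))).
Definition mu_l_inf t P := mu_l t P (size (cT (cl P))).
Definition mu_R_inf t P := mu_R t P (size (cT (cr P))).
Definition mu_L_inf t P := mu_L t P (size (cB (cl P))).

Definition parallel (v w : weight) : bool := v.1 * w.2 == v.2 * w.1.

Definition isMV (t : afftype) (P : pwpoly) : Prop :=
  valid_datum (cl P) /\ valid_datum (cr P) /\ wt t (cl P) = wt t (cr P) /\
  (forall k, (2 <= k)%N ->
     Num.max (pw1 (wsub (mu_l t P k) (mu_r t P k.-1)))
             (pw0 (wsub (mu_r t P k) (mu_l t P k.-1))) = 0) /\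
  (forall k, (2 <= k)%N ->
     Num.min (pw0 (wsub (mu_L t P k) (mu_R t P k.-1)))
             (pw1 (wsub (mu_R t P k) (mu_L t P k.-1))) = 0) /\
  (let v := wsub (mu_r_inf t P) (mu_l_inf t P) in
   let w := wsub (mu_R_inf t P) (mu_L_inf t P) in
   if parallel v w then cD (cr P) = cD (cl P)
   else exists k : nat, dfac t * k%:Z = pa1 t v /\
          (perm_eq (cD (cr P)) (k :: cD (cl P)) \/
           perm_eq (cD (cl P)) (k :: cD (cr P)))) /\
  (let v := wsub (mu_r_inf t P) (mu_l_inf t P) in
   all (fun x => dfac t * x%:Z <= pa1 t v) (cD (cr P)) /\
   all (fun x => dfac t * x%:Z <= pa1 t v) (cD (cl P))).

(* "the" polytope satisfying Q, if any (None plays the role of the empty set) *)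
Definition pick (Q : pwpoly -> Prop) : option pwpoly :=
  match excluded_middle_informative (exists P, Q P) with
  | left H => Some (proj1_sig (constructive_indefinite_description Q H))
  | right _ => None
  end.

Definition incr0 (s : seq nat) := incr_nth s 0.
Definition decr0 (s : seq nat) : option (seq nat) :=
  match s with
  | [::] => None
  | 0%N :: _ => None
  | n.+1 :: s' => Some (trimz (n :: s'))
  end.

Definition e0 t (P : pwpoly) : option pwpoly :=
  pick (fun Q => isMV t Q /\
        cr Q = LD (cB (cr P)) (incr0 (cT (cr P))) (cD (cr P))).
Definition e1 t (P : pwpoly) : option pwpoly :=
  pick (fun Q => isMV t Q /\
        cl Q = LD (incr0 (cB (cl P))) (cT (cl P)) (cD (cl P))).
Definition f0 t (P : pwpoly) : option pwpoly :=
  match decr0 (cT (cr P)) with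
  | None => None
  | Some s => pick (fun Q => isMV t Q /\ cr Q = LD (cB (cr P)) s (cD (cr P)))
  end.
Definition f1 t (P : pwpoly) : option pwpoly :=
  match decr0 (cB (cl P)) with
  | None => None
  | Some s => pick (fun Q => isMV t Q /\ cl Q = LD s (cT (cl P)) (cD (cl P)))
  end.

(* Kashiwara's involution: P |-> wt(P) - P, which swaps left and right data *)
Definition star (P : pwpoly) : pwpoly := (cr P, cl P).
Definition f0star t (P : pwpoly) : option pwpoly := omap star (f0 t (star P)).

Definition iterO (g : pwpoly -> option pwpoly) (n : nat) (x : option pwpoly) :=
  iter n (fun y => obind g y) x.
Definition is_phi (g : pwpoly -> option pwpoly) (b : pwpoly) (n : nat) : Prop :=
  iterO g n (Some b) <> None /\ iterO g n.+1 (Some b) = None.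

(* Main.v *)
Require Import Defs.
From HB Require Import structures.
From mathcomp Require Import all_boot all_order all_algebra.
From mathcomp Require Import ring lra zify.
From Stdlib Require Import ClassicalEpsilon.
Import Order.TTheory GRing.Theory Num.Theory.
Local Open Scope ring_scope.
Local Open Scope ring_scope.
Lemma halfE (i : nat) : i = (odd i + 2 * i./2)%N.
Proof. rewrite -{1}(odd_double_half i) -muln2 mulnC //. Qed.

Ltac parity i := let e := fresh "e" in let e2 := fresh "e" in have e := halfE i; have e2 := halfE i.+1; move: e e2; simpl odd; case: (odd i) => /= e e2.

Lemma sB t i : s0 t (betaB t i) = betaT t i.+1.
Proof.
case: t => /=; rewrite /s0 /ca0 /=. f_equal; lia.
parity i; simpl; f_equal; lia.
Qed.
Lemma T0 t : betaT t 0 = alpha0. Proof. by case: t. Qed.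
Lemma T1pos t i : 0 < (betaT t i.+1).2.
Proof. case: t => /=; [lia|]; parity i; simpl; lia. Qed.
Lemma T0pos t i : 0 <= (betaT t i.+1).1.
Proof. case: t => /=; [lia|]; parity i; simpl; lia. Qed.
Lemma Tmono t i : (betaT t i.+2).1 * (betaT t i.+1).2 <= (betaT t i.+1).1 * (betaT t i.+2).2.
Proof. case: t => /=; [nia|]; parity i; simpl; nia. Qed.
Lemma Tdelta t i : (delta t).1 * (betaT t i.+1).2 <= (betaT t i.+1).1 * (delta t).2.
Proof. case: t => /=; [nia|]; parity i; simpl; nia. Qed.
Lemma B1pos t i : 0 < (betaB t i).2.
Proof. case: t => /=; [lia|]; parity i; simpl; lia. Qed.
Lemma B0pos t i : 0 <= (betaB t i).1.
Proof. case: t => /=; [lia|]; parity i; simpl; lia. Qed.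
Lemma Bmono t i : (betaB t i).1 * (betaB t i.+1).2 <= (betaB t i.+1).1 * (betaB t i).2.
Proof. case: t => /=; [nia|]; parity i; simpl; nia. Qed.
Lemma Bdelta t i : (betaB t i).1 * (delta t).2 <= (delta t).1 * (betaB t i).2.
Proof. case: t => /=; [nia|]; parity i; simpl; nia. Qed.
Lemma pairE (u v : weight) : u.1 = v.1 -> u.2 = v.2 -> u = v.
Proof. by case: u; case: v => ? ? ? ? /= -> ->. Qed.
Ltac wring := apply: pairE => /=; ring.

Lemma lin_ext beta beta' s s' k :
  (forall i, (i < k)%N -> nth 0%N s i = nth 0%N s' i /\ beta i = beta' i) ->
  lin beta s k = lin beta' s' k.
Proof.
elim: k => [//|k IH] h /=.
rewrite IH; last by move=> i hi; apply: h; apply: ltnW.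
by case: (h k (ltnSn k)) => -> ->.
Qed.

Lemma lin_const_add beta s d : lin beta s (size s + d) = lin beta s (size s).
Proof.
elim: d => [|d IH]; first by rewrite addn0.
rewrite addnS /= IH nth_default ?leq_addr //. wring.
Qed.

Lemma lin_const beta s k : (size s <= k)%N -> lin beta s k = lin beta s (size s).
Proof. move=> h; rewrite -(subnKC h); exact: lin_const_add. Qed.

Lemma lin_behead beta s k :
  lin beta s k.+1 = wadd (wscale (nth 0%N s 0) (beta 0%N)) (lin (fun i => beta i.+1) (behead s) k).
Proof.
elim: k => [|k IH]; first by wring.
change (lin beta s k.+2) with (wadd (lin beta s k.+1) (wscale (nth 0%N s k.+1) (beta k.+1))).
rewrite IH /= nth_behead. wring.
Qed.

Lemma lin_s0 t beta s k : s0 t (lin beta s k) = lin (fun i => s0 t (beta i)) s k.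
Proof.
elim: k => [|k IH]; first by case: t; wring.
rewrite /= -IH. move: (lin _ _ _) (beta k) => u v. clear IH. case: t; wring.
Qed.

Lemma lin_wzero beta k : lin beta [::] k = wzero.
Proof. elim: k => [//|k IH] /=; rewrite IH nth_nil; wring. Qed.
Lemma nth_trimz s i : nth 0%N (trimz s) i = nth 0%N s i.
Proof.
elim: s i => [//|x s IH] i /=.
case: ifP => [/andP [/eqP -> /eqP e] | _].
  by case: i => [//|i] /=; rewrite -IH e nth_nil.
by case: i => [//|i] /=.
Qed.

Lemma trimz_idem s : trimz (trimz s) = trimz s.
Proof.
elim: s => [//|x s IH] /=.
case: ifP => [//|h] /=. by rewrite IH h.
Qed.

Lemma trimz_behead s : trimz s = s -> trimz (behead s) = behead s.
Proof. case: s => [//|x s] /=. by case: ifP => // _ [->]. Qed.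

Definition dech (s : seq nat) : seq nat :=
  match s with [::] => [::] | k :: s' => trimz (k.-1 :: s') end.

Lemma dech_nth0 s : nth 0%N (dech s) 0 = (nth 0%N s 0).-1.
Proof. case: s => [//|k s]. by rewrite /dech nth_trimz. Qed.
Lemma dech_nthS s i : nth 0%N (dech s) i.+1 = nth 0%N s i.+1.
Proof. case: s => [//|k s]. by rewrite /dech nth_trimz. Qed.

Lemma iter_dech_nth0 j s : nth 0%N (iter j dech s) 0 = (nth 0%N s 0 - j)%N.
Proof. elim: j => [|j IH] /=; first by rewrite subn0. by rewrite dech_nth0 IH subnS. Qed.
Lemma iter_dech_nthS j s i : nth 0%N (iter j dech s) i.+1 = nth 0%N s i.+1.
Proof. elim: j => [//|j IH] /=. by rewrite dech_nthS IH. Qed.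

Lemma valid_dech a s d : valid_datum (LD a s d) -> valid_datum (LD a (dech s) d).
Proof.
case=> /= h1 [h2 [h3 h4]]; split => //; split => //=.
case: s h2 => [//|k s] _. exact: trimz_idem.
Qed.
Lemma valid_iter_dech j a s d : valid_datum (LD a s d) -> valid_datum (LD a (iter j dech s) d).
Proof. elim: j => [//|j IH] h /=. exact: valid_dech (IH h). Qed.

Lemma decr0_dech s : (0 < nth 0%N s 0)%N -> decr0 s = Some (dech s).
Proof. by case: s => [//|[|k] s]. Qed.
Lemma decr0_none s : nth 0%N s 0 = 0%N -> decr0 s = None.
Proof. by case: s => [//|[|k] s]. Qed.

Lemma pick_some (Q : pwpoly -> Prop) P : Defs.pick Q = Some P -> Q P.
Proof.
rewrite /Defs.pick; case: excluded_middle_informative => // h [<-].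
exact: proj2_sig.
Qed.
Lemma pick_ex (Q : pwpoly -> Prop) : (exists P, Q P) -> exists P, Defs.pick Q = Some P.
Proof. rewrite /Defs.pick => h; destruct (excluded_middle_informative _) as [e|e]; [by eexists | by []]. Qed.

Lemma pick_none (Q : pwpoly -> Prop) : Defs.pick Q = None -> forall P, ~ Q P.
Proof. rewrite /Defs.pick; destruct (excluded_middle_informative _) as [e|e] => // _ P hP. apply: e. by exists P. Qed.

Lemma iterO_S g n x : iterO g n.+1 x = obind g (iterO g n x).
Proof. by []. Qed.
Lemma iterO_None g n : iterO g n None = None.
Proof. elim: n => [//|n IH]. by rewrite iterO_S IH. Qed.
Lemma iterO_add g a c x : iterO g (a + c) x = iterO g a (iterO g c x).
Proof. elim: a => [//|a IH]. by rewrite addSn !iterO_S IH. Qed.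

Section F0.
Variable t : afftype.
Hypothesis BR : forall c, valid_datum c -> exists P, isMV t P /\ cr P = c.

Lemma f0_iter P j : valid_datum (cr P) -> (j <= nth 0%N (cT (cr P)) 0)%N ->
  exists P', iterO (f0 t) j (Some P) = Some P' /\
    cr P' = LD (cB (cr P)) (iter j dech (cT (cr P))) (cD (cr P)).
Proof.
move=> hv; elim: j => [|j IH] hj; first by exists P; split => //; case: (cr P).
case: IH; first exact: ltnW.
move=> P' [e1 e2]. rewrite iterO_S e1 /= /f0 e2 /= decr0_dech; last first.
  rewrite iter_dech_nth0; lia.
have hv' : valid_datum (LD (cB (cr P)) (iter j.+1 dech (cT (cr P))) (cD (cr P))).
  apply: valid_iter_dech. by case: (cr P) hv.
case: (BR _ hv') => Q hQ.
case e3: (Defs.pick _) => [P2|]; last by case: (pick_none _ e3 Q hQ).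
exists P2; split => //. by case: (pick_some _ _ e3) => _ ->.
Qed.

Lemma f0_none P : nth 0%N (cT (cr P)) 0 = 0%N -> f0 t P = None.
Proof. move=> h. by rewrite /f0 decr0_none. Qed.

Lemma phi_eq P m : valid_datum (cr P) -> is_phi (f0 t) P m -> m = nth 0%N (cT (cr P)) 0.
Proof.
move=> hv [h1 h2]. set h := nth 0%N _ 0.
case: (ltngtP m h) => // hmh.
- case: (f0_iter P m.+1 hv hmh) => P' [e _]. by rewrite e in h2.
- case: (f0_iter P h hv (leqnn h)) => P' [e1 e2].
  have e3 : iterO (f0 t) h.+1 (Some P) = None.
    rewrite iterO_S e1 /= f0_none // e2 /= iter_dech_nth0. by rewrite subnn.
  exfalso; apply: h1. by rewrite -(subnK hmh) iterO_add e3 iterO_None.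
Qed.

Lemma phi0 P : valid_datum (cr P) -> iterO (f0 t) 1 (Some P) = None -> nth 0%N (cT (cr P)) 0 = 0%N.
Proof.
move=> hv e. case h: (nth 0%N (cT (cr P)) 0) => [//|k].
case: (f0_iter P 1 hv); first by rewrite h.
move=> P' [e' _]. by rewrite e' in e.
Qed.
End F0.

Lemma f0star_iter t j x : iterO (f0star t) j (Some x) = omap star (iterO (f0 t) j (Some (star x))).
Proof.
elim: j => [|j IH]; first by case: x.
rewrite !iterO_S IH. case: (iterO (f0 t) j _) => [y|//] /=.
rewrite /f0star. by case: y.
Qed.

Lemma e0_iter t j b x : isMV t b -> iterO (e0 t) j (Some b) = Some x ->
  isMV t x /\ cr x = LD (cB (cr b)) (iter j incr0 (cT (cr b))) (cD (cr b)).
Proof.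
move=> hb; elim: j x => [|j IH] x /=; first by case=> <-; split => //; case: (cr b).
case e: (iterO (e0 t) j (Some b)) => [y|//] /= he.
case: (IH y e) => hy ey.
have := pick_some _ _ he. case=> hx ->. by rewrite ey.
Qed.

Lemma iter_incr_nth0 j s : nth 0%N (iter j incr0 s) 0 = (nth 0%N s 0 + j)%N.
Proof. elim: j => [|j IH] /=; first by rewrite addn0. by rewrite /incr0 nth_incr_nth IH addnS. Qed.
Lemma iter_incr_nthS j s i : nth 0%N (iter j incr0 s) i.+1 = nth 0%N s i.+1.
Proof. elim: j => [//|j IH] /=. by rewrite /incr0 nth_incr_nth IH. Qed.


Lemma s0_add t u v : s0 t (wadd u v) = wadd (s0 t u) (s0 t v).
Proof. case: t; wring. Qed.
Lemma s0_sub t u v : s0 t (wsub u v) = wsub (s0 t u) (s0 t v).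
Proof. case: t; wring. Qed.
Lemma s0_scale t k u : s0 t (wscale k u) = wscale k (s0 t u).
Proof. case: t; wring. Qed.
Lemma s0K t u : s0 t (s0 t u) = u.
Proof. case: t; wring. Qed.
Lemma sT t i : s0 t (betaT t i.+1) = betaB t i.
Proof. by rewrite -sB s0K. Qed.
Lemma s0_2 t u : (s0 t u).2 = u.2.
Proof. by []. Qed.
Lemma s0_delta t : s0 t (delta t) = delta t.
Proof. by case: t. Qed.

Lemma linT_S t s k :
  lin (betaT t) s k.+1 = wadd (wscale (nth 0%N s 0) alpha0) (s0 t (lin (betaB t) (behead s) k)).
Proof.
rewrite lin_behead T0 lin_s0. congr wadd. apply: lin_ext => i _; split => //. by rewrite sB.
Qed.

Lemma wt_at t d k : (size (cB d) <= k)%N -> (size (cT d) <= k)%N ->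
  wt t d = wadd (wscale (sumn (cD d)) (delta t)) (wadd (lin (betaB t) (cB d) k) (lin (betaT t) (cT d) k)).
Proof. move=> h1 h2. by rewrite /wt (lin_const _ _ _ h1) (lin_const _ _ _ h2). Qed.

Lemma lin_trimz beta s k : lin beta (trimz s) k = lin beta s k.
Proof. apply: lin_ext => i _; by rewrite nth_trimz. Qed.

Lemma size_trimz s : (size (trimz s) <= size s)%N.
Proof. elim: s => [//|x s IH] /=. case: ifP => //= _. Qed.
Lemma div_pos (q a b : int) : 0 < q -> q * a <= q * b -> a <= b.
Proof. move=> hq h. by rewrite -(ler_pM2l hq). Qed.

Lemma ratio_up (D0 D1 x q0 q1 : nat -> int) :
 (forall j, D0 j.+1 = D0 j + x j * q0 j) -> (forall j, D1 j.+1 = D1 j + x j * q1 j) ->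
 (forall j, 0 < q1 j) -> (forall j, q0 j.+1 * q1 j <= q0 j * q1 j.+1) -> (forall j, 0 <= D1 j) ->
 D1 0%N * q0 0%N <= D0 0%N * q1 0%N -> forall j, D1 j * q0 j <= D0 j * q1 j.
Proof.
move=> e0 e1 hq hm hd hb; elim=> [//|j IH].
have h1 : D1 j.+1 * q0 j <= D0 j.+1 * q1 j by rewrite e0 e1; nia.
rewrite -(ler_pM2l (hq j)).
have h2 : D1 j.+1 * (q0 j.+1 * q1 j) <= D1 j.+1 * (q0 j * q1 j.+1) by apply: ler_wpM2l.
have h3 : (D1 j.+1 * q0 j) * q1 j.+1 <= (D0 j.+1 * q1 j) * q1 j.+1.
  by apply: ler_wpM2r => //; apply: ltW.
nia.
Qed.

Lemma ratio_down (D0 D1 x q0 q1 : nat -> int) K :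
 (forall j, D0 j.+1 = D0 j + x j * q0 j) -> (forall j, D1 j.+1 = D1 j + x j * q1 j) ->
 (forall j, 0 < q1 j) -> (forall j, q0 j * q1 j.+1 <= q0 j.+1 * q1 j) -> (forall j, 0 <= D1 j) ->
 (forall j, (K <= j)%N -> D1 j * q0 j <= D0 j * q1 j) -> forall j, D1 j * q0 j <= D0 j * q1 j.
Proof.
move=> e0 e1 hq hm hd hb.
have step : forall j, D1 j.+1 * q0 j.+1 <= D0 j.+1 * q1 j.+1 -> D1 j * q0 j <= D0 j * q1 j.
  move=> j h.
  have h1 : D1 j.+1 * q0 j <= D0 j.+1 * q1 j.
    rewrite -(ler_pM2l (hq j.+1)).
    have h2 : D1 j.+1 * (q0 j * q1 j.+1) <= D1 j.+1 * (q0 j.+1 * q1 j) by apply: ler_wpM2l.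
    have h3 : (D1 j.+1 * q0 j.+1) * q1 j <= (D0 j.+1 * q1 j.+1) * q1 j.
      by apply: ler_wpM2r => //; apply: ltW.
    nia.
  move: h1; rewrite e0 e1; nia.
have gen : forall d j, D1 (d + j) * q0 (d + j) <= D0 (d + j) * q1 (d + j) -> D1 j * q0 j <= D0 j * q1 j.
  elim=> [//|d IH] j h. apply: IH. apply: step. by rewrite -addSn.
move=> j. apply: (gen K j). apply: hb. exact: leq_addr.
Qed.
Lemma max0 (a b : int) : Num.max a b = 0 -> a <= 0 /\ b <= 0.
Proof. rewrite maxEle; case: ifP => h e; lia. Qed.
Lemma min0 (a b : int) : Num.min a b = 0 -> 0 <= a /\ 0 <= b.
Proof. rewrite minEle; case: ifP => h e; lia. Qed.
Lemma max0I (a b : int) : a = 0 -> b <= 0 -> Num.max a b = 0.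
Proof. rewrite maxEle; case: ifP => h e; lia. Qed.
Lemma min0I (a b : int) : 0 <= a -> b = 0 -> Num.min a b = 0.
Proof. rewrite minEle; case: ifP => h e; lia. Qed.
Lemma delta2pos t : 0 < (delta t).2. Proof. by case: t. Qed.
Lemma delta1pos t : 0 <= (delta t).1. Proof. by case: t. Qed.
Lemma s0_1 t v : (s0 t v).1 = v.1 - ca0 t v. Proof. by []. Qed.
Lemma ca0_add t u v : ca0 t (wadd u v) = ca0 t u + ca0 t v. Proof. case: t => /=; ring. Qed.
Lemma ca0_sub t u v : ca0 t (wsub u v) = ca0 t u - ca0 t v. Proof. case: t => /=; ring. Qed.
Lemma ca0_scale t k u : ca0 t (wscale k u) = k%:Z * ca0 t u. Proof. case: t => /=; ring. Qed.
Lemma ca0_delta t : ca0 t (delta t) = 0. Proof. by case: t. Qed.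
Lemma pa1E t v : pa1 t v = -2 * ((delta t).2 * v.1 - (delta t).1 * v.2). Proof. case: t => /=; ring. Qed.
Lemma ca0_s0 t v : ca0 t (s0 t v) = - ca0 t v. Proof. case: t => /=; ring. Qed.
Lemma iter_incr_size j s : (size (iter j incr0 s) <= (size s).+1)%N.
Proof.
elim: j => [//|j IH] /=. rewrite /incr0 size_incr_nth.
by case: ifP.
Qed.
Lemma iter_incrS j s : iter j.+1 incr0 s = (nth 0%N s 0 + j.+1)%N :: behead s.
Proof.
elim: j => [|j IH].
  by case: s => [|x s]; rewrite /= /incr0 /= ?add0n ?addn1.
rewrite iterS IH /incr0 /=. by rewrite !addnS.
Qed.
Lemma wsub1 (a b : weight) : (wsub a b).1 = a.1 - b.1. Proof. by []. Qed.
Lemma wsub2 (a b : weight) : (wsub a b).2 = a.2 - b.2. Proof. by []. Qed.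
Lemma wadd1 (a b : weight) : (wadd a b).1 = a.1 + b.1. Proof. by []. Qed.
Lemma wadd2 (a b : weight) : (wadd a b).2 = a.2 + b.2. Proof. by []. Qed.
Lemma wscale1 k (a : weight) : (wscale k a).1 = k%:Z * a.1. Proof. by []. Qed.
Lemma wscale2 k (a : weight) : (wscale k a).2 = k%:Z * a.2. Proof. by []. Qed.
Lemma a0_1 : alpha0.1 = 1. Proof. by []. Qed.
Lemma a0_2 : alpha0.2 = 0. Proof. by []. Qed.
Definition wE := (wsub1, wsub2, wadd1, wadd2, wscale1, wscale2, a0_1, a0_2, s0_1, s0_2).
Lemma betaB_inj t i j : betaB t i = betaB t j -> i = j.
Proof.
move=> e; have e1 := congr1 fst e; have e3 := congr1 snd e; move: e1 e3; clear e.
case: t => /=; [lia|].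
parity i; parity j; move=> f1 f2; lia.
Qed.
Lemma betaT_inj t i j : betaT t i = betaT t j -> i = j.
Proof.
move=> e; have e1 := congr1 fst e; have e3 := congr1 snd e; move: e1 e3; clear e.
case: t => /=; [lia|].
parity i; parity j; move=> f1 f2; lia.
Qed.
Lemma betaBT t i j : betaB t i <> betaT t j.
Proof.
move=> e; have e1 := congr1 fst e; have e3 := congr1 snd e; move: e1 e3; clear e.
case: t => /=; [lia|].
parity i; parity j; move=> f1 f2; lia.
Qed.
Lemma rroot_B t r' i : rroot t r' = betaB t i -> r' = LB i.
Proof.
case: r' => [k|k] /= e; first by rewrite (betaB_inj t k i e).
by case: (betaBT t i k).
Qed.
Lemma rroot_T t r' i : rroot t r' = betaT t i -> r' = LT i.
Proof.
case: r' => [k|k] /= e; last by rewrite (betaT_inj t k i e).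
by case: (betaBT t k i).
Qed.

Section Core.
Variable t : afftype.
Variables bL bR : ldatum.
Hypothesis hb : isMV t (bL, bR).
Hypothesis h0 : nth 0%N (cT bR) 0 = 0%N.

Local Notation n := (nth 0%N (cT bL) 0).
Local Notation W := (wt t bR).
Local Notation r j := (lin (betaB t) (cB bR) j).
Local Notation u j := (lin (betaT t) (cT bL) j).
Local Notation A j := (lin (betaT t) (cT bR) j).
Local Notation L' j := (lin (betaB t) (cB bL) j).

Lemma c1a k : (1 < k)%N -> (u k).2 <= (r k.-1).2.
Proof. move=> h; case: hb => _ [_ [_ [H _]]]. by case: (max0 _ _ (H k h)); rewrite /pw1 /pw0 /mu_l /mu_r /= => *; lia. Qed.
Lemma c1b k : (1 < k)%N -> (r k).1 <= (u k.-1).1.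
Proof. move=> h; case: hb => _ [_ [_ [H _]]]. by case: (max0 _ _ (H k h)); rewrite /pw1 /pw0 /mu_l /mu_r /= => *; lia. Qed.
Lemma c2a k : (1 < k)%N -> (L' k).1 <= (A k.-1).1.
Proof. move=> h; case: hb => _ [_ [_ [_ [H _]]]]. by case: (min0 _ _ (H k h)); rewrite /pw1 /pw0 /mu_L /mu_R /= => *; lia. Qed.
Lemma c2b k : (1 < k)%N -> (A k).2 <= (L' k.-1).2.
Proof. move=> h; case: hb => _ [_ [_ [_ [H _]]]]. by case: (min0 _ _ (H k h)); rewrite /pw1 /pw0 /mu_L /mu_R /= => *; lia. Qed.

Definition D0 j := (n : int) + (s0 t (r j)).1 - (u j.+1).1.
Definition D1 j := (r j).2 - (u j.+1).2.

Lemma D1_ge0 j : 0 <= D1 j.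
Proof.
rewrite /D1; case: j => [|j].
  rewrite /= T0 /=. lia.
have := c1a (j.+2) (isT : (1 < j.+2)%N). rewrite /=. lia.
Qed.

Lemma D0_rec j : D0 j.+1 = D0 j + ((nth 0%N (cB bR) j)%:Z - (nth 0%N (cT bL) j.+1)%:Z) * (betaT t j.+1).1.
Proof.
rewrite /D0.
change (r j.+1) with (wadd (r j) (wscale (nth 0%N (cB bR) j) (betaB t j))).
change (u j.+2) with (wadd (u j.+1) (wscale (nth 0%N (cT bL) j.+1) (betaT t j.+1))).
rewrite s0_add s0_scale sB /=. ring.
Qed.
Lemma D1_rec j : D1 j.+1 = D1 j + ((nth 0%N (cB bR) j)%:Z - (nth 0%N (cT bL) j.+1)%:Z) * (betaT t j.+1).2.
Proof.
rewrite /D1.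
change (r j.+1) with (wadd (r j) (wscale (nth 0%N (cB bR) j) (betaB t j))).
change (u j.+2) with (wadd (u j.+1) (wscale (nth 0%N (cT bL) j.+1) (betaT t j.+1))).
rewrite -(sB t j) /=. ring.
Qed.

Lemma G j : D1 j * (betaT t j.+1).1 <= D0 j * (betaT t j.+1).2.
Proof.
apply: (ratio_up (fun j => D0 j) (fun j => D1 j) (fun j => (nth 0%N (cB bR) j)%:Z - (nth 0%N (cT bL) j.+1)%:Z)
   (fun j => (betaT t j.+1).1) (fun j => (betaT t j.+1).2)).
- exact: D0_rec.
- exact: D1_rec.
- move=> i; exact: T1pos.
- move=> i; exact: Tmono.
- exact: D1_ge0.
- rewrite /D0 /D1 /= T0 /=. case: t => /=; lia.
Qed.

Lemma D0_ge0 j : 0 <= D0 j.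
Proof.
have := G j; have := D1_ge0 j; have := T0pos t j; have := T1pos t j.
move=> h1 h2 h3 h4.
have : 0 <= D0 j * (betaT t j.+1).2 by apply: le_trans h4; apply: mulr_ge0.
by rewrite pmulr_lge0.
Qed.

Lemma Glim j : D1 j * (delta t).1 <= D0 j * (delta t).2.
Proof.
have := G j; have := D1_ge0 j; have := Tdelta t j; have := T1pos t j.
move=> h1 h2 h3 h4.
rewrite -(ler_pM2l h1).
have : D1 j * ((delta t).1 * (betaT t j.+1).2) <= D1 j * ((betaT t j.+1).1 * (delta t).2) by apply: ler_wpM2l.
have : (D1 j * (betaT t j.+1).1) * (delta t).2 <= (D0 j * (betaT t j.+1).2) * (delta t).2.
  apply: ler_wpM2r => //. by case: (t).
nia.
Qed.

Definition Dt0 k := (n : int) - ca0 t W + (L' k).1 - (s0 t (A k.+1)).1.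
Definition Dt1 k := (L' k).2 - (A k.+1).2.

Lemma Dt1_ge0 k : 0 <= Dt1 k.
Proof.
rewrite /Dt1; case: k => [|k].
  rewrite /= h0 /=. lia.
have := c2b (k.+2) (isT : (1 < k.+2)%N). rewrite /=. lia.
Qed.

Lemma Dt0_rec k : Dt0 k.+1 = Dt0 k + ((nth 0%N (cB bL) k)%:Z - (nth 0%N (cT bR) k.+1)%:Z) * (betaB t k).1.
Proof.
rewrite /Dt0.
change (L' k.+1) with (wadd (L' k) (wscale (nth 0%N (cB bL) k) (betaB t k))).
change (A k.+2) with (wadd (A k.+1) (wscale (nth 0%N (cT bR) k.+1) (betaT t k.+1))).
rewrite s0_add s0_scale sT /=. ring.
Qed.
Lemma Dt1_rec k : Dt1 k.+1 = Dt1 k + ((nth 0%N (cB bL) k)%:Z - (nth 0%N (cT bR) k.+1)%:Z) * (betaB t k).2.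
Proof.
rewrite /Dt1.
change (L' k.+1) with (wadd (L' k) (wscale (nth 0%N (cB bL) k) (betaB t k))).
change (A k.+2) with (wadd (A k.+1) (wscale (nth 0%N (cT bR) k.+1) (betaT t k.+1))).
rewrite -(sT t k) /=. ring.
Qed.

Definition Kb := (size (cB bR) + size (cT bR) + size (cB bL) + size (cT bL))%N.

Lemma top_lim k : (Kb <= k)%N -> Dt1 k * (delta t).1 <= Dt0 k * (delta t).2.
Proof.
move=> hk.
have s1 : (size (cB bR) <= k)%N by move: hk; rewrite /Kb; lia.
have s2 : (size (cT bR) <= k)%N by move: hk; rewrite /Kb; lia.
have s3 : (size (cB bL) <= k)%N by move: hk; rewrite /Kb; lia.
have s4 : (size (cT bL) <= k)%N by move: hk; rewrite /Kb; lia.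
have eA : A k.+1 = A k by rewrite (lin_const _ _ k.+1) ?(lin_const _ _ k) //; apply: leqW.
have eu : u k.+1 = u k by rewrite (lin_const _ _ k.+1) ?(lin_const _ _ k) //; apply: leqW.
have eW := wt_at t bR k s1 s2.
have eWL := wt_at t bL k s3 s4.
have ew : wt t bL = wt t bR by case: hb => _ [_ [-> _]].
have e1 : Dt0 k = D0 k + ((sumn (cD bR))%:Z - (sumn (cD bL))%:Z) * (delta t).1.
  rewrite /Dt0 /D0 eA eu !s0_1 eW ca0_add ca0_add ca0_scale ca0_delta.
  have := congr1 fst ew; rewrite eWL eW /=. move=> h. lia.
have e2 : Dt1 k = D1 k + ((sumn (cD bR))%:Z - (sumn (cD bL))%:Z) * (delta t).2.
  rewrite /Dt1 /D1 eA eu.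
  have := congr1 snd ew; rewrite eWL eW /=. move=> h. lia.
have := Glim k. rewrite e1 e2. nia.
Qed.

Lemma J k : Dt1 k * (betaB t k).1 <= Dt0 k * (betaB t k).2.
Proof.
apply: (ratio_down (fun j => Dt0 j) (fun j => Dt1 j) (fun j => (nth 0%N (cB bL) j)%:Z - (nth 0%N (cT bR) j.+1)%:Z)
   (fun j => (betaB t j).1) (fun j => (betaB t j).2) Kb).
- exact: Dt0_rec.
- exact: Dt1_rec.
- move=> i; exact: B1pos.
- move=> i; exact: Bmono.
- exact: Dt1_ge0.
- move=> j hj /=.
  have h1 := top_lim j hj. have h2 := Dt1_ge0 j. have h3 := Bdelta t j. have h4 := delta2pos t.
  rewrite -(ler_pM2l h4).
  have : Dt1 j * ((betaB t j).1 * (delta t).2) <= Dt1 j * ((delta t).1 * (betaB t j).2) by apply: ler_wpM2l.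
  have : (Dt1 j * (delta t).1) * (betaB t j).2 <= (Dt0 j * (delta t).2) * (betaB t j).2.
    apply: ler_wpM2r => //. exact: ltW (B1pos t j).
  nia.
Qed.

Lemma Dt0_ge0 k : 0 <= Dt0 k.
Proof.
have := J k; have := Dt1_ge0 k; have := B0pos t k; have := B1pos t k.
move=> h1 h2 h3 h4.
have : 0 <= Dt0 k * (betaB t k).2 by apply: le_trans h4; apply: mulr_ge0.
by rewrite pmulr_lge0.
Qed.

Variable N : nat.
Hypothesis hN : (n : int) - ca0 t W <= N%:Z.
Definition Mz := (N : int) + ca0 t W.
Lemma Mz_ge : (n : int) <= Mz. Proof. rewrite /Mz; lia. Qed.
Definition Mn := absz Mz.
Lemma MnE : (Mn : int) = Mz.
Proof. rewrite /Mn gez0_abs //. have := Mz_ge. lia. Qed.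
Definition Lc := LD (behead (cT bR)) (trimz (Mn :: cB bR)) (cD bR).
Definition RN := LD (cB bR) (iter N incr0 (cT bR)) (cD bR).

Local Notation P' k := (lin (betaB t) (behead (cT bR)) k).

Lemma muLc k : lin (betaT t) (trimz (Mn :: cB bR)) k.+1 = wadd (wscale Mn alpha0) (s0 t (r k)).
Proof. by rewrite lin_trimz linT_S. Qed.
Lemma muRN k : lin (betaT t) (iter N incr0 (cT bR)) k.+1 = wadd (wscale N alpha0) (s0 t (P' k)).
Proof.
rewrite linT_S iter_incr_nth0 h0 add0n. congr (wadd _ (s0 t _)).
apply: lin_ext => i _; split => //. by rewrite !nth_behead iter_incr_nthS.
Qed.
Lemma AS k : A k.+1 = wadd (wscale 0 alpha0) (s0 t (P' k)).
Proof. by rewrite linT_S h0. Qed.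

Lemma e_mu_l k : mu_l t (Lc, RN) k = lin (betaT t) (trimz (Mn :: cB bR)) k. Proof. by []. Qed.
Lemma e_mu_r k : mu_r t (Lc, RN) k = r k. Proof. by []. Qed.
Lemma e_mu_L k : mu_L t (Lc, RN) k = wsub (wt t RN) (P' k). Proof. by []. Qed.
Lemma e_mu_R k : mu_R t (Lc, RN) k = wsub (wt t RN) (lin (betaT t) (iter N incr0 (cT bR)) k). Proof. by []. Qed.

Lemma validLc : valid_datum Lc.
Proof.
case: hb => _ [[h1 [h2 [h3 h4]]] _].
split; [exact: trimz_behead | split; [exact: trimz_idem | split => //]].
Qed.
Lemma validRN : valid_datum RN.
Proof.
case: hb => _ [[h1 [h2 [h3 h4]]] _]. split; [|split; [|split]] => //=.
case: N => [//|N']. rewrite iter_incrS /=. rewrite addnS /=. by rewrite trimz_behead.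
Qed.

Lemma wt_eq : wt t Lc = wt t RN.
Proof.
set k0 := (size (cB bR) + size (cT bR))%N.
have sa : (size (behead (cT bR)) <= k0)%N by rewrite size_behead /k0; lia.
have sc : (size (cB bR) <= k0)%N by rewrite /k0; lia.
have s1 : (size (cT Lc) <= k0.+1)%N.
  apply: leq_trans (size_trimz _) _. rewrite /= ltnS //.
have s2 : (size (cT RN) <= k0.+1)%N.
  apply: leq_trans (iter_incr_size _ _) _. rewrite ltnS /k0; lia.
rewrite (wt_at t Lc k0.+1 (leqW sa) s1) (wt_at t RN k0.+1 (leqW sc) s2).
have s3 : (size (cT bR) <= k0)%N by rewrite /k0; lia.
have eW := wt_at t bR k0.+1 (leqW sc) (leqW s3).
have hM := MnE. rewrite /Mz eW in hM.
rewrite /Lc /RN. cbn [cB cT cD].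
rewrite muLc muRN.
rewrite AS in hM.
rewrite (lin_const _ _ k0.+1 (leqW sa)) (lin_const _ _ k0.+1 (leqW sc)) in hM *.
rewrite ?(lin_const _ _ k0 sa) ?(lin_const _ _ k0 sc) in hM *.
apply: pairE; rewrite /= ?s0_1 in hM *.
- rewrite !ca0_add !ca0_scale !ca0_delta ca0_s0 in hM. rewrite /= in hM. lia.
- lia.
Qed.


Lemma cond1Q k : (1 < k)%N ->
  Num.max (pw1 (wsub (mu_l t (Lc, RN) k) (mu_r t (Lc, RN) k.-1)))
          (pw0 (wsub (mu_r t (Lc, RN) k) (mu_l t (Lc, RN) k.-1))) = 0.
Proof.
case: k => [//|[//|j]] _. change (j.+2).-1 with j.+1.
rewrite !e_mu_l !e_mu_r !muLc /pw1 /pw0.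
apply: max0I.
- rewrite !wE. ring.
- have h1 := c1b j.+2 isT. have h2 := D0_ge0 j. have h3 := Mz_ge. have h4 := MnE.
  rewrite /D0 in h2. change (j.+2).-1 with j.+1 in h1.
  move: (r j.+2) (r j) (u j.+1) h1 h2 => R2 R0 U1 h1 h2.
  rewrite !wE in h2 *. lia.
Qed.

Lemma cond2Q k : (1 < k)%N ->
  Num.min (pw0 (wsub (mu_L t (Lc, RN) k) (mu_R t (Lc, RN) k.-1)))
          (pw1 (wsub (mu_R t (Lc, RN) k) (mu_L t (Lc, RN) k.-1))) = 0.
Proof.
case: k => [//|[//|j]] _. change (j.+2).-1 with j.+1.
rewrite !e_mu_L !e_mu_R !muRN /pw1 /pw0.
apply: min0I.
- have h1 := c2a j.+2 isT. have h2 := Dt0_ge0 j.+2.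
  rewrite /Dt0 in h2. change (j.+2).-1 with j.+1 in h1. rewrite !AS in h1 h2.
  rewrite s0_add s0_scale s0K in h2.
  move: (P' j.+2) (P' j) (L' j.+2) h1 h2 => Q2 Q0 L2 h1 h2.
  rewrite !wE in h1 h2 *. lia.
- rewrite !wE. ring.
Qed.


Lemma vQ : wsub (mu_r_inf t (Lc, RN)) (mu_l_inf t (Lc, RN)) =
  wsub (r (size (cB bR))) (wadd (wscale Mn alpha0) (s0 t (r (size (cB bR))))).
Proof.
rewrite /mu_r_inf /mu_l_inf e_mu_l e_mu_r.
change (size (cT (cl (Lc, RN)))) with (size (trimz (Mn :: cB bR))).
change (size (cB (cr (Lc, RN)))) with (size (cB bR)).
rewrite -(lin_const _ (trimz (Mn :: cB bR)) (size (cB bR)).+1 (size_trimz _)).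
by rewrite muLc.
Qed.

Lemma wQ2 : (wsub (mu_R_inf t (Lc, RN)) (mu_L_inf t (Lc, RN))).2 = 0.
Proof.
rewrite /mu_R_inf /mu_L_inf e_mu_L e_mu_R.
change (size (cT (cr (Lc, RN)))) with (size (iter N incr0 (cT bR))).
change (size (cB (cl (Lc, RN)))) with (size (behead (cT bR))).
rewrite -(lin_const _ (iter N incr0 (cT bR)) (size (cT bR)).+1 (iter_incr_size _ _)).
rewrite muRN.
have hs : (size (behead (cT bR)) <= size (cT bR))%N by rewrite size_behead; lia.
rewrite -(lin_const _ _ _ hs).
move: (P' (size (cT bR))) (wt t RN) => X Y.
rewrite !wE. ring.
Qed.

Lemma pa1_key : pa1 t (wsub (mu_r_inf t (bL, bR)) (mu_l_inf t (bL, bR))) <=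
  pa1 t (wsub (mu_r_inf t (Lc, RN)) (mu_l_inf t (Lc, RN))).
Proof.
rewrite vQ.
have hg := Glim Kb. rewrite /D0 /D1 in hg.
have e1 : r Kb = r (size (cB bR)) by apply: lin_const; rewrite /Kb; lia.
have e2 : u Kb.+1 = u (size (cT bL)) by apply: lin_const; rewrite /Kb; lia.
rewrite e1 e2 in hg.
change (mu_r_inf t (bL, bR)) with (r (size (cB bR))).
change (mu_l_inf t (bL, bR)) with (u (size (cT bL))).
have h3 := Mz_ge. have h4 := MnE. have h5 := delta2pos t.
have h6 : 0 <= (delta t).2 * (Mz - (n : int)) by apply: mulr_ge0; [exact: ltW | lia].
rewrite !pa1E.
move: (r (size (cB bR))) (u (size (cT bL))) hg => X Y hg.
rewrite !wE in hg *.
nia.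
Qed.

Lemma candMV : isMV t (Lc, RN).
Proof.
split; [exact: validLc|]. split; [exact: validRN|]. split; [exact: wt_eq|].
split; [exact: cond1Q|]. split; [exact: cond2Q|]. split.
- cbv zeta.
  have hv : (wsub (mu_r_inf t (Lc, RN)) (mu_l_inf t (Lc, RN))).2 = 0.
    rewrite vQ. move: (r (size (cB bR))) => X. rewrite !wE. ring.
  by rewrite /parallel hv wQ2 mulr0 mul0r eqxx.
- cbv zeta.
  case: hb => _ [_ [_ [_ [_ [_ h4]]]]]. cbv zeta in h4. case: h4 => h4 _.
  have k := pa1_key.
  split; (apply: sub_all h4 => y hy; exact: le_trans hy k).
Qed.

End Core.

Theorem mainTheorem2 (t : afftype)
  (* BDKT: each Lusztig datum is the right (resp. left) datum of exactly one MV polytope *)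
  (BDKT_r : forall c, valid_datum c -> exists! P, isMV t P /\ cr P = c)
  (BDKT_l : forall c, valid_datum c -> exists! P, isMV t P /\ cl P = c)
  (b : pwpoly) (hb : isMV t b) (hphi : is_phi (f0 t) b 0)
  (N : nat)
  (hN : exists n, is_phi (f0 t) (star b) n /\ n%:Z - ca0 t (wtP t (star b)) <= N%:Z)
  (x : pwpoly) (hx : iterO (e0 t) N (Some b) = Some x)
  (m : nat) (hm : is_phi (f0star t) x m)
  (S : pwpoly) (hS : iterO (f0star t) m (Some x) = Some S) :
  coef (cl S) (LT 0) = 0%N /\
  (forall r r' : rlabel, rroot t r <> alpha0 -> rroot t r' = s0 t (rroot t r) ->
     coef (cl S) r = coef (cr b) r') /\
  cD (cl S) = cD (cr b).
Proof.
have BR : forall c, valid_datum c -> exists P, isMV t P /\ cr P = c.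
  move=> c hc. case: (BDKT_r c hc) => P [hP _]. by exists P.
destruct b as [bL bR].
have hvR : valid_datum bR by case: hb => _ [].
have hvL : valid_datum bL by case: hb => [].
have h0 : nth 0%N (cT bR) 0 = 0%N by apply: (phi0 t BR (bL, bR) hvR); case: hphi.
case: hN => n' [hn' hle].
have en' : n' = nth 0%N (cT bL) 0 := phi_eq t BR (star (bL, bR)) n' hvL hn'.
have ewt : wtP t (star (bL, bR)) = wt t bR by case: hb => _ [_ [h _]]; exact: h.
rewrite ewt en' in hle.
have hQ := candMV t bL bR hb h0 N hle.
case: (e0_iter t N (bL, bR) x hb hx) => hxMV hxr.
have ex : x = (Lc t bR N, RN bR N).
  case: (BDKT_r (RN bR N) (validRN t bL bR hb N)) => P [_ hu].
  rewrite -(hu x) ?(hu (Lc t bR N, RN bR N)) //.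
have hvLc : valid_datum (Lc t bR N) := validLc t bL bR hb N.
have hm' : is_phi (f0 t) (star x) m.
  case: hm; rewrite !f0star_iter => h1 h2. split.
  - move=> e; apply: h1; by rewrite e.
  - move: h2; by case: (iterO (f0 t) m.+1 _).
have hn0 : nth 0%N (cT (cr (star x))) 0 = Mn t bR N.
  rewrite ex; exact: (nth_trimz (Mn t bR N :: cB bR) 0).
have em : m = Mn t bR N.
  rewrite (phi_eq t BR (star x) m _ hm'); last by rewrite ex.
  exact: hn0.
case: (f0_iter t BR (star x) m); [by rewrite ex | by rewrite hn0 em |].
move=> P' [e1 e2].
rewrite f0star_iter e1 /= in hS. case: hS => hS. subst S.
have ecl : cl (star P') = LD (behead (cT bR)) (iter m dech (trimz (Mn t bR N :: cB bR))) (cD bR).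
  by rewrite /star /cl /= e2 ex.
rewrite ecl.
split; [|split].
- change (nth 0%N (iter m dech (trimz (Mn t bR N :: cB bR))) 0 = 0%N).
  by rewrite iter_dech_nth0 nth_trimz em subnn.
- case=> [i|[|i]] r' hr hr'.
  + rewrite /rroot sB in hr'. rewrite (rroot_T t r' i.+1 hr').
    change (nth 0%N (behead (cT bR)) i = nth 0%N (cT bR) i.+1).
    by rewrite nth_behead.
  + by case: hr; rewrite /= T0.
  + rewrite /rroot sT in hr'. rewrite (rroot_B t r' i hr').
    change (nth 0%N (iter m dech (trimz (Mn t bR N :: cB bR))) i.+1 = nth 0%N (cB bR) i).
    by rewrite iter_dech_nthS nth_trimz.
- by [].
Qed.
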